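(* Let $m\ge2$ and let $G$ be the group of type $D_1$. Then the distinct non-identity normal subgroups of $G$ are exactly: (i) $\langle t^{2^{\alpha}},x\rangle$, $\langle t^{2^{\alpha}},y\rangle$, $\langle t^{2^{\alpha}},xy\rangle$, $\langle t^{2^{\alpha}},x,y\rangle$ for $0\le\alpha\le m-1$; (ii) $\langle t^{2^{\beta}}x\rangle$, $\langle t^{2^{\beta}}y\rangle$, $\langle t^{2^{m-1}},t^{2^{\beta}}xy\rangle$, $\langle t^{2^{m-1}},x,t^{2^{\beta}}y\rangle$, $\langle t^{2^{m-1}},t^{2^{\beta}}x,y\rangle$, $\langle t^{2^{\beta}}x,t^{2^{\beta}}y\rangle$ for $0\le\beta\le m-2$; (iii) $\langle t^{2^{\gamma}}\rangle$ for $0\le\gamma\le m-1$.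
   Context: The group of type $D_1$ (with parameter $m\ge1$) is $G=\langle x,y,t\mid x^2=y^2=t^{2^m}=1,\ y^{-1}x^{-1}yx\,t^{2^{m-1}}=1,\ t \text{ central}\rangle$, of order $2^{m+2}$. *)

(* Defs.v *)
From mathcomp Require Import all_boot all_order all_fingroup.
Set Implicit Arguments. Unset Strict Implicit. Unset Printing Implicit Defensive.
Import GroupScope.

(* The group of type D_1: generated by x, y, t with
   x^2 = y^2 = t^(2^m) = 1, [~ y, x] * t^(2^(m-1)) = 1 (mathcomp's
   [~ y, x] = y^-1 * x^-1 * y * x), t central, and of order 2^(m+2). *)
Definition D1_rels (gT : finGroupType) (m : nat) (x y t : gT) : Prop :=
  [/\ x ^+ 2 = 1, y ^+ 2 = 1, t ^+ (2 ^ m) = 1,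
      [~ y, x] * t ^+ (2 ^ (m - 1)) = 1 & commute t x /\ commute t y].

Section D1List.
Variables (gT : finGroupType) (m : nat) (x y t : gT).

Definition D1_list_i : seq {set gT} :=
  flatten [seq [:: <<[set t ^+ (2 ^ a); x]>>; <<[set t ^+ (2 ^ a); y]>>;
                   <<[set t ^+ (2 ^ a); x * y]>>; <<[set t ^+ (2 ^ a); x; y]>>]
          | a <- iota 0 m].

Definition D1_list_ii : seq {set gT} :=
  flatten [seq [:: <[t ^+ (2 ^ b) * x]>; <[t ^+ (2 ^ b) * y]>;
                   <<[set t ^+ (2 ^ (m - 1)); t ^+ (2 ^ b) * (x * y)]>>;
                   <<[set t ^+ (2 ^ (m - 1)); x; t ^+ (2 ^ b) * y]>>;
                   <<[set t ^+ (2 ^ (m - 1)); t ^+ (2 ^ b) * x; y]>>;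
                   <<[set t ^+ (2 ^ b) * x; t ^+ (2 ^ b) * y]>>]
          | b <- iota 0 (m - 1)].

Definition D1_list_iii : seq {set gT} :=
  [seq <[t ^+ (2 ^ c)]> | c <- iota 0 m].

Definition D1_list : seq {set gT} := D1_list_i ++ D1_list_ii ++ D1_list_iii.
End D1List.

(* Main.v *)
Require Import Defs.
From mathcomp Require Import all_boot all_order all_fingroup.
From mathcomp Require Import cyclic.
From mathcomp Require Import zify.
Set Implicit Arguments. Unset Strict Implicit. Unset Printing Implicit Defensive.
Import GroupScope.

Section D1.
Variables (gT : finGroupType) (m : nat) (x y t : gT) (G : {group gT}).
Hypothesis hm : (2 <= m)%N.
Hypothesis hrel : D1_rels m x y t.
Hypothesis hG : G :=: <<[set x; y; t]>>.
Hypothesis hcard : #|G| = (2 ^ (m + 2))%N.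

Local Notation N := (2 ^ m)%N.
Local Notation h := (2 ^ (m - 1))%N.
Local Notation z := (t ^+ h).
Definition f i a b := t ^+ i * x ^+ a * y ^+ b.

Lemma hN : N = (2 * h)%N.
Proof. by rewrite -expnS subn1 prednK // ltnW. Qed.

Lemma N_gt0 : (0 < N)%N. Proof. by rewrite expn_gt0. Qed.

Lemma xx : x * x = 1. Proof. by case: hrel => hx _ _ _ _; rewrite -hx expgS expg1. Qed.
Lemma yy : y * y = 1. Proof. by case: hrel => _ hy _ _ _; rewrite -hy expgS expg1. Qed.
Lemma tN : t ^+ N = 1. Proof. by case: hrel. Qed.
Lemma zz : z * z = 1. Proof. by rewrite -expgD addnn -mul2n -hN tN. Qed.
Lemma xinv : x^-1 = x. Proof. by rewrite -[x^-1]mulg1 -xx mulKg. Qed.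
Lemma yinv : y^-1 = y. Proof. by rewrite -[y^-1]mulg1 -yy mulKg. Qed.
Lemma zinv : z^-1 = z. Proof. by rewrite -[z^-1]mulg1 -zz mulKg. Qed.
Lemma ctx : commute t x. Proof. by case: hrel => _ _ _ _ []. Qed.
Lemma cty : commute t y. Proof. by case: hrel => _ _ _ _ []. Qed.
Lemma czx : commute z x. Proof. exact: commute_sym (commuteX _ (commute_sym ctx)). Qed.
Lemma czy : commute z y. Proof. exact: commute_sym (commuteX _ (commute_sym cty)). Qed.


Lemma hc : y * (x * (y * x)) * z = 1.
Proof. by case: hrel => _ _ _ + _; rewrite /commg /conjg xinv yinv. Qed.

Lemma yx : y * x = x * y * z.
Proof.
have e : y * x * z = x * y.
  transitivity (x * y * (y * (x * (y * x)) * z)); last by rewrite hc mulg1.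
  by rewrite !mulgA -(mulgA x y y) yy mulg1 xx mul1g.
by rewrite -e -mulgA zz mulg1.
Qed.

Lemma yxa a : y * x ^+ a = x ^+ a * y * z ^+ a.
Proof.
elim: a => [|a IH]; first by rewrite !expg0 !mulg1 mul1g.
have cz : commute (z ^+ a) x := commute_sym (commuteX a (commute_sym czx)).
rewrite !expgSr mulgA IH -!mulgA cz (mulgA y x) yx -!mulgA.
by rewrite -expgS expgSr.
Qed.

Lemma yxab b a : y ^+ b * x ^+ a = x ^+ a * y ^+ b * z ^+ (b * a).
Proof.
elim: b => [|b IH]; first by rewrite !expg0 !mulg1 mul1g.
have cz : commute (z ^+ a) (y ^+ b) := commuteX b (commute_sym (commuteX a (commute_sym czy))).
rewrite expgS -mulgA IH !mulgA yxa -!mulgA; congr (_ * (_ * _)).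
by rewrite mulgA cz -mulgA -expgD mulSn.
Qed.

Lemma ctg g : g \in <<[set x; y; t]>> -> commute t g.
Proof.
move=> Hg; suff : g \in 'C[t] by move/cent1P => /commute_sym.
move: g Hg; apply/subsetP; rewrite gen_subG; apply/subsetP => g.
move=> /setUP [/setU1P [->|/set1P ->]|/set1P ->]; apply/cent1P.
- exact: commute_sym ctx.
- exact: commute_sym cty.
- exact: commute_refl.
Qed.

Lemma ctxy a b : commute t (x ^+ a * y ^+ b).
Proof. exact: commuteM (commuteX a ctx) (commuteX b cty). Qed.
Lemma ctixy j a b : commute (t ^+ j) (x ^+ a * y ^+ b).
Proof. exact: commute_sym (commuteX j (commute_sym (ctxy a b))). Qed.

Lemma fmul i a b j c d : f i a b * f j c d = f (i + j + h * (b * c)) (a + c) (b + d).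
Proof.
rewrite /f !expgD expgM.
rewrite -(mulgA (t ^+ i)) -(mulgA (t ^+ j)) (mulgA _ (t ^+ j)) -(mulgA (t ^+ i)).
rewrite -(ctixy j a b) !mulgA -(mulgA _ (y ^+ b)) yxab.
set u := z ^+ (b * c).
have cuy : commute u (y ^+ d) := commuteX _ (commute_sym (commuteX _ (commute_sym czy))).
have cux : commute (x ^+ (a) * x ^+ c * y ^+ b) u.
  apply: commute_sym; apply: commuteM; [apply: commuteM|].
  - exact: commuteX _ (commute_sym (commuteX _ (commute_sym czx))).
  - exact: commuteX _ (commute_sym (commuteX _ (commute_sym czx))).
  - exact: commuteX _ (commute_sym (commuteX _ (commute_sym czy))).
rewrite !mulgA; congr (_ * _); rewrite -!mulgA; congr (_ * (_ * _)).
by rewrite !mulgA cux !mulgA.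
Qed.

Lemma x2 : x ^+ 2 = 1. Proof. by case: hrel. Qed.
Lemma y2 : y ^+ 2 = 1. Proof. by case: hrel. Qed.

Lemma f_odd i a b : f i a b = f (i %% N) (odd a) (odd b).
Proof. by rewrite /f -!modn2 (expg_mod _ tN) (expg_mod _ x2) (expg_mod _ y2). Qed.

Lemma fcongr i a b j c d :
  i = j %[mod N] -> odd a = odd c -> odd b = odd d -> f i a b = f j c d.
Proof. by move=> e1 e2 e3; rewrite f_odd e1 e2 e3 -f_odd. Qed.

Definition F' (p : 'I_N * bool * bool) := f p.1.1 p.1.2 p.2.
Definition Sall := F' @: [set: 'I_N * bool * bool].

Lemma F'E (i : 'I_N) (a b : bool) : F' (i, a, b) = f i a b. Proof. by []. Qed.

Lemma f_Sall i a b : f i a b \in Sall.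
Proof.
apply/imsetP; exists (Ordinal (ltn_pmod i N_gt0), odd a, odd b) => //.
by rewrite /F' /= -f_odd.
Qed.

Lemma Sall_group : group_set Sall.
Proof.
apply/group_setP; split.
  by rewrite (_ : 1 = f 0 0 0) ?f_Sall // /f !expg0 !mulg1.
by move=> _ _ /imsetP [[[i a] b] _ ->] /imsetP [[[j c] d] _ ->]; rewrite /F' fmul f_Sall.
Qed.

Lemma xE : x = f 0 1 0. Proof. by rewrite /f expg0 mul1g expg1 expg0 mulg1. Qed.
Lemma yE : y = f 0 0 1. Proof. by rewrite /f !expg0 !mul1g expg1. Qed.
Lemma tE i : t ^+ i = f i 0 0. Proof. by rewrite /f !expg0 !mulg1. Qed.

Lemma G_Sall : G :=: Sall.
Proof.
have sGS : G \subset Sall.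
  rewrite hG (gen_subG _ (Group Sall_group)).
  apply/subsetP => g /setUP [/setU1P [->|/set1P ->]|/set1P ->].
  - by rewrite [x]xE; apply: f_Sall.
  - by rewrite [y]yE; apply: f_Sall.
  - by rewrite -[t]expg1 tE; apply: f_Sall.
apply/eqP; rewrite eqEcard sGS hcard /=.
apply: leq_trans (leq_imset_card _ _) _.
by rewrite cardsT card_prod card_prod card_ord card_bool expnD -mulnA.
Qed.

Lemma F'_inj : injective F'.
Proof.
move=> p q e.
have : {in setT &, injective F'}.
  apply/imset_injP; apply/eqP.
  rewrite -/Sall -G_Sall hcard cardsT card_prod card_prod card_ord card_bool expnD.
  by rewrite -mulnA.
by move/(_ p q); apply.
Qed.

Lemma f_inj i a b j c d :
  f i a b = f j c d -> [/\ i = j %[mod N], odd a = odd c & odd b = odd d].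
Proof.
rewrite f_odd (f_odd j) => e.
have := @F'_inj (Ordinal (ltn_pmod i N_gt0), odd a, odd b)
               (Ordinal (ltn_pmod j N_gt0), odd c, odd d) e.
by case=> e1 -> ->; split=> //; move: (congr1 val e1).
Qed.

Lemma memG g : g \in G -> exists i (a b : bool), g = f i a b.
Proof. by rewrite G_Sall => /imsetP [[[i a] b] _ ->]; exists i, a, b. Qed.

Lemma f_G i a b : f i a b \in G.
Proof. by rewrite G_Sall f_Sall. Qed.

Definition Pk (k : nat) (a b : bool) : bool :=
  match k with 0 => ~~ a && ~~ b | 1 => ~~ b | 2 => ~~ a | 3 => a == b | _ => true end.
Definition E al u v (a b : bool) := (2 ^ al.-1 * (u * a + v * b))%N.
Definition prd al k u v i (a b : bool) :=
  Pk k a b && (i == E al u v a b %[mod 2 ^ al]).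

Lemma dvd_alN al : (al <= m)%N -> (2 ^ al %| N)%N.
Proof. exact: dvdn_exp2l. Qed.

Lemma dvd_alh al : (al < m)%N -> (2 ^ al %| h)%N.
Proof. by move=> lt; apply: dvdn_exp2l; lia. Qed.

Lemma prd_mod al k u v i j a b : (al <= m)%N -> i = j %[mod N] ->
  prd al k u v i a b = prd al k u v j a b.
Proof.
move=> le e; rewrite /prd.
by rewrite -(modn_dvdm i (dvd_alN le)) e (modn_dvdm j (dvd_alN le)).
Qed.

Lemma modh al i n : (al < m)%N -> i + h * n = i %[mod 2 ^ al].
Proof.
move=> lt; case/dvdnP: (dvd_alh lt) => q ->.
by rewrite mulnAC addnC modnMDl.
Qed.

Lemma E_add al u v a b c d :
  E al u v a b + E al u v c d = E al u v (a (+) c) (b (+) d) %[mod 2 ^ al].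
Proof.
rewrite /E; case: al => [|al]; first by rewrite !modn1.
rewrite /= expnS.
have -> : (2 ^ al * (u * a + v * b) + 2 ^ al * (u * c + v * d) =
   (u * (a && c) + v * (b && d)) * (2 * 2 ^ al) + 2 ^ al * (u * (a (+) c) + v * (b (+) d)))%N.
  by case: a; case: b; case: c; case: d => /=; nia.
by rewrite modnMDl.
Qed.

Lemma Pk_mul k a b c d : Pk k a b -> Pk k c d -> Pk k (a (+) c) (b (+) d).
Proof. by case: k => [|[|[|[|k]]]]; case: a; case: b; case: c; case: d. Qed.

Lemma prd_mul al k u v i a b j c d : (al < m)%N ->
  prd al k u v i a b -> prd al k u v j c d ->
  prd al k u v (i + j + h * (b * c)) (a (+) c) (b (+) d).
Proof.
move=> lt /andP [P1 /eqP e1] /andP [P2 /eqP e2]; rewrite /prd Pk_mul //=.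
by rewrite modh // -modnDm e1 e2 modnDm E_add.
Qed.

Definition Sp al k u v :=
  F' @: [set p : 'I_N * bool * bool | prd al k u v p.1.1 p.1.2 p.2].

Lemma fb i (a b : bool) : f i a b = f (i %% N) a b.
Proof. by rewrite f_odd !oddb. Qed.

Lemma mem_Sp al k u v i (a b : bool) : (al <= m)%N ->
  (f i a b \in Sp al k u v) = prd al k u v i a b.
Proof.
move=> le; apply/imsetP/idP.
  case=> [[[j c] d]]; rewrite inE /= => Hp /f_inj [e1].
  by rewrite /= !oddb => ea eb; rewrite ea eb (prd_mod _ _ _ _ _ le e1).
move=> Hp; exists (Ordinal (ltn_pmod i N_gt0), a, b); last by rewrite /F' /= -fb.
by rewrite inE /= (prd_mod _ _ _ _ _ le (modn_mod _ _)).
Qed.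

Lemma fmulb i (a b : bool) j (c d : bool) :
  f i a b * f j c d = f (i + j + h * (b * c)) (a (+) c) (b (+) d).
Proof. by rewrite fmul (f_odd _ (a + c)) !oddD !oddb -fb. Qed.

Lemma Sp_group al k u v : (al < m)%N -> group_set (Sp al k u v).
Proof.
move=> lt; have le := ltnW lt; apply/group_setP; split.
  rewrite (_ : 1 = f 0 false false) ?mem_Sp // ?/f ?expg0 ?mulg1 //.
  rewrite /prd (_ : E al u v false false = 0); last by rewrite /E /= !muln0.
  by rewrite eqxx andbT; case: k => [|[|[|[|k]]]].
move=> g1 g2 /imsetP [[[i a] b] P1 ->] /imsetP [[[j c] d] P2 ->].
rewrite !inE /= in P1 P2.
by rewrite /F' /= fmulb mem_Sp // prd_mul.
Qed.

Lemma Sp_G al k u v : Sp al k u v \subset G.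
Proof. by rewrite G_Sall; apply: imsetS; apply/subsetP => p. Qed.

Lemma NrE r : (r + (N - 1) * r = N * r)%N.
Proof. by rewrite -mulSn subn1 prednK // N_gt0. Qed.

Lemma dvdNr d r : (d %| N)%N -> (N * r)%N = 0 %[mod d].
Proof. by move=> dN; rewrite mod0n; apply/eqP; exact: dvdn_mulr. Qed.

Lemma Mh1 d i r : i = r %[mod d] -> (d %| N)%N -> (i + (N - 1) * r)%N = 0 %[mod d].
Proof. by move=> e dN; rewrite -modnDml e modnDml NrE dvdNr. Qed.

Lemma Mh2 d i r : (r + (N - 1) * i)%N = 0 %[mod d] -> (d %| N)%N -> i = r %[mod d].
Proof.
move=> e dN.
have e2 : (r + (N - 1) * i + i)%N = (r + N * i)%N by rewrite -addnA (addnC _ i) NrE.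
have := congr1 (modn^~ d) e2; rewrite /= -modnDml e modnDml add0n => ->.
by rewrite -modnDmr (dvdNr _ dN) mod0n addn0.
Qed.

Lemma f_shift i r a b : f i a b = t ^+ (i + (N - 1) * r) * f r a b.
Proof.
rewrite (@fcongr i a b (i + (N - 1) * r + r) a b) //; last first.
  by rewrite -addnA (addnC _ r) NrE mulnC addnC modnMDl.
by rewrite /f !mulgA expgD.
Qed.

Lemma tmem (K : {group gT}) al j : t ^+ (2 ^ al) \in K -> j = 0 %[mod 2 ^ al] -> t ^+ j \in K.
Proof.
move=> Ht ej; rewrite (divn_eq j (2 ^ al)) ej mod0n addn0 mulnC expgM.
exact: groupX.
Qed.

Lemma rep_low (K : {group gT}) al r i a b : t ^+ (2 ^ al) \in K -> (al <= m)%N ->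
  f r a b \in K -> i = r %[mod 2 ^ al] -> f i a b \in K.
Proof.
move=> Ht le Hr e; rewrite (f_shift i r) groupM //.
exact: (tmem Ht (Mh1 e (dvd_alN le))).
Qed.

Lemma rep_up (K : {group gT}) al r i a b : (al <= m)%N ->
  (forall j, t ^+ j \in K -> j = 0 %[mod 2 ^ al]) ->
  f r a b \in K -> f i a b \in K -> i = r %[mod 2 ^ al].
Proof.
move=> le HK Hr Hi; apply: Mh2 (dvd_alN le); apply: HK.
by rewrite -(mulgK (f i a b) (t ^+ _)) -f_shift groupM ?groupV.
Qed.

Definition good (K : {set gT}) al k u v :=
  K \subset G /\ forall i (a b : bool), (f i a b \in K) = prd al k u v i a b.

Lemma low (K : {group gT}) al k u v : (al <= m)%N -> t ^+ (2 ^ al) \in K ->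
  (forall a0 b0 : bool, Pk k a0 b0 ->
     exists2 r, f r a0 b0 \in K & r = E al u v a0 b0 %[mod 2 ^ al]) ->
  forall i (a b : bool), prd al k u v i a b -> f i a b \in K.
Proof.
move=> le Ht Hrep i a b /andP [Pab /eqP e].
case: (Hrep a b Pab) => r Hr er; apply: (rep_low Ht le Hr).
by rewrite e er.
Qed.

Lemma goodL (S : {set gT}) al k u v : (al < m)%N ->
  S \subset Sp al k u v -> t ^+ (2 ^ al) \in <<S>> ->
  (forall a0 b0 : bool, Pk k a0 b0 ->
     exists2 r, f r a0 b0 \in <<S>> & r = E al u v a0 b0 %[mod 2 ^ al]) ->
  good <<S>> al k u v.
Proof.
move=> lt sS Ht Hrep.
have sSp : <<S>> \subset Sp al k u v by rewrite (gen_subG _ (Group (Sp_group k u v lt))).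
split; first exact: subset_trans sSp (Sp_G _ _ _ _).
move=> i a b; apply/idP/idP.
  by move/(subsetP sSp); rewrite mem_Sp // ltnW.
exact: low (ltnW lt) Ht Hrep i a b.
Qed.

Lemma xEb : x = f 0 true false. Proof. exact: xE. Qed.
Lemma yEb : y = f 0 false true. Proof. exact: yE. Qed.

Lemma conjx i (a b : bool) : (f i a b) ^ x = f (i + h * b) a b.
Proof.
rewrite conjgE xinv xEb !fmulb.
by apply: fcongr; case: a; case: b => //=; congr (_ %% _); lia.
Qed.

Lemma conjy i (a b : bool) : (f i a b) ^ y = f (i + h * a) a b.
Proof.
rewrite conjgE yinv yEb !fmulb.
by apply: fcongr; case: a; case: b => //=; congr (_ %% _); lia.
Qed.

Lemma prd_h al k u v i n a b : (al < m)%N ->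
  prd al k u v (i + h * n) a b = prd al k u v i a b.
Proof. by move=> lt; rewrite /prd modh. Qed.

Lemma normK (K : {group gT}) s : (forall g, g \in K -> g ^ s \in K) -> s \in 'N(K).
Proof.
move=> HK; apply/normP; apply/eqP; rewrite eqEcard cardJg leqnn andbT.
by apply/subsetP => _ /imsetP [g Hg ->]; exact: HK.
Qed.

Lemma f000 : f 0 false false = 1. Proof. by rewrite /f !expg0 !mulg1. Qed.

Lemma z_neq1 : z != 1.
Proof.
apply/eqP; rewrite tE -f000 => /f_inj [e _ _].
move: e; rewrite mod0n modn_small; first by move/eqP; rewrite expn_eq0.
by rewrite ltn_exp2l //; lia.
Qed.

Lemma tEb i : t ^+ i = f i false false. Proof. exact: tE. Qed.

Lemma E00 al u v : E al u v false false = 0.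
Proof. by rewrite /E /= !muln0. Qed.

Lemma z_good (K : {set gT}) al k u v : (al < m)%N -> good K al k u v -> z \in K.
Proof.
move=> lt [_ HK]; rewrite tEb HK /prd E00 mod0n.
have := dvd_alh lt; rewrite /dvdn => ->; rewrite andbT.
by clear HK; case: k => [|[|[|[|k]]]].
Qed.

Lemma good_normal (K : {group gT}) al k u v : (al < m)%N -> good K al k u v ->
  (K <| G) && (K :!=: 1).
Proof.
move=> lt gd; have [sKG HK] := gd; apply/andP; split; last first.
  by apply/trivgPn; exists z; [exact: z_good gd | exact: z_neq1].
rewrite /normal sKG /= hG gen_subG.
apply/subsetP => s /setUP [/setU1P [->|/set1P ->]|/set1P ->]; apply: normK => g Hg;
  have [i [a [b e]]] := memG (subsetP sKG g Hg); subst g.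
- by rewrite conjx HK prd_h // -HK.
- by rewrite conjy HK prd_h // -HK.
- have := f_G i a b; rewrite hG => /ctg ct.
  by rewrite conjgE -ct mulKg.
Qed.

Lemma txE i : t ^+ i * x = f i true false. Proof. by rewrite /f /= expg1 expg0 mulg1. Qed.
Lemma tyE i : t ^+ i * y = f i false true. Proof. by rewrite /f /= expg1 expg0 mulg1. Qed.
Lemma txyE i : t ^+ i * (x * y) = f i true true. Proof. by rewrite /f /= !expg1 mulgA. Qed.
Lemma xyE : x * y = f 0 true true. Proof. by rewrite -txyE expg0 mul1g. Qed.

Lemma rep00 (K : {group gT}) al u v :
  exists2 r, f r false false \in K & r = E al u v false false %[mod 2 ^ al].
Proof. by exists 0; rewrite ?f000 ?group1 ?E00. Qed.

Ltac simp := rewrite /prd /E /= ?muln0 ?mul0n ?muln1 ?mul1n ?addn0 ?add0n ?modnn ?mod0n ?eqxx.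

Lemma sqx b : f (2 ^ b) true false * f (2 ^ b) true false = t ^+ (2 ^ b.+1).
Proof. by rewrite fmulb tEb /= muln0 addn0 addnn -mul2n -expnS. Qed.
Lemma sqy b : f (2 ^ b) false true * f (2 ^ b) false true = t ^+ (2 ^ b.+1).
Proof. by rewrite fmulb tEb /= !muln0 addn0 addnn -mul2n -expnS. Qed.
Lemma sqxy b : f (2 ^ b) true true * f (2 ^ b) true true * z = t ^+ (2 ^ b.+1).
Proof.
rewrite fmulb tEb fmulb tEb; apply: fcongr => //=.
rewrite !muln1 !muln0 addn0 addnn -mul2n -expnS -addnA addnn -mul2n -hN.
by rewrite -modnDmr modnn addn0.
Qed.

Lemma inS1 (g : gT) (A : {set gT}) : g \in A -> g \in <<A>>.
Proof. exact: mem_gen. Qed.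

Ltac mg := apply: mem_gen; rewrite !inE ?eqxx ?orbT //.

Lemma fam_ia a : (a < m)%N -> good <<[set t ^+ (2 ^ a); x]>> a 1 0 0.
Proof.
move=> lt; have le := ltnW lt.
rewrite xEb; apply: goodL => //.
- by rewrite !subUset !sub1set tEb !mem_Sp //; simp.
- by mg.
move=> [] [] //= _; last exact: rep00.
by exists 0; [mg | simp].
Qed.

Lemma fam_ib a : (a < m)%N -> good <<[set t ^+ (2 ^ a); y]>> a 2 0 0.
Proof.
move=> lt; have le := ltnW lt.
rewrite yEb; apply: goodL => //.
- by rewrite !subUset !sub1set tEb !mem_Sp //; simp.
- by mg.
move=> [] [] //= _; last exact: rep00.
by exists 0; [mg | simp].
Qed.

Lemma fam_ic a : (a < m)%N -> good <<[set t ^+ (2 ^ a); x * y]>> a 3 0 0.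
Proof.
move=> lt; have le := ltnW lt.
rewrite xyE; apply: goodL => //.
- by rewrite !subUset !sub1set tEb !mem_Sp //; simp.
- by mg.
move=> [] [] //= _; last exact: rep00.
by exists 0; [mg | simp].
Qed.

Lemma fam_id a : (a < m)%N -> good <<[set t ^+ (2 ^ a); x; y]>> a 4 0 0.
Proof.
move=> lt; have le := ltnW lt.
rewrite xEb yEb; apply: goodL => //.
- by rewrite !subUset !sub1set tEb !mem_Sp //; simp.
- by mg.
move=> [] [] //= _; last exact: rep00.
- exists (0 + 0 + h * (false * true)); last by simp.
  by have := @groupM _ _ (f 0 true false) (f 0 false true); rewrite fmulb; apply; mg.
- by exists 0; [mg | simp].
- by exists 0; [mg | simp].
Qed.

Lemma fam_iii c : (c < m)%N -> good <[t ^+ (2 ^ c)]> c 0 0 0.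
Proof.
move=> lt; have le := ltnW lt.
apply: goodL => //.
- by rewrite sub1set tEb !mem_Sp //; simp.
- by mg.
by move=> [] [] //= _; exact: rep00.
Qed.

Lemma fam_iia b : (b.+1 < m)%N -> good <[t ^+ (2 ^ b) * x]> b.+1 1 1 0.
Proof.
move=> lt; have le := ltnW lt.
rewrite txE; apply: goodL => //.
- by rewrite sub1set !mem_Sp //; simp.
- by rewrite -sqx groupM //; mg.
move=> [] [] //= _; last exact: rep00.
by exists (2 ^ b)%N; [mg | simp].
Qed.

Lemma fam_iib b : (b.+1 < m)%N -> good <[t ^+ (2 ^ b) * y]> b.+1 2 0 1.
Proof.
move=> lt; have le := ltnW lt.
rewrite tyE; apply: goodL => //.
- by rewrite sub1set !mem_Sp //; simp.
- by rewrite -sqy groupM //; mg.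
move=> [] [] //= _; last exact: rep00.
by exists (2 ^ b)%N; [mg | simp].
Qed.

Lemma prd_z al k u v : (al < m)%N -> prd al k u v h false false.
Proof.
move=> lt; rewrite /prd E00 mod0n.
have := dvd_alh lt; rewrite /dvdn => ->; rewrite andbT.
by case: k => [|[|[|[|k]]]].
Qed.

Lemma fam_iic b : (b.+1 < m)%N ->
  good <<[set t ^+ (2 ^ (m - 1)); t ^+ (2 ^ b) * (x * y)]>> b.+1 3 1 0.
Proof.
move=> lt; have le := ltnW lt.
rewrite txyE tEb; apply: goodL => //.
- by rewrite !subUset !sub1set !mem_Sp // prd_z //; simp.
- by rewrite -sqxy; apply: groupM; [apply: groupM|]; rewrite ?tEb; mg.
move=> [] [] //= _; last exact: rep00.
by exists (2 ^ b)%N; [mg | simp].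
Qed.

Lemma fam_iid b : (b.+1 < m)%N ->
  good <<[set t ^+ (2 ^ (m - 1)); x; t ^+ (2 ^ b) * y]>> b.+1 4 0 1.
Proof.
move=> lt; have le := ltnW lt.
rewrite tyE xEb tEb; apply: goodL => //.
- by rewrite !subUset !sub1set !mem_Sp // prd_z //; simp.
- by rewrite -sqy; apply: groupM; mg.
move=> [] [] //= _; last exact: rep00.
- exists (0 + 2 ^ b + h * (false * false))%N; last by simp.
  by have := @groupM _ _ (f 0 true false) (f (2 ^ b) false true); rewrite fmulb; apply; mg.
- by exists 0; [mg | simp].
- by exists (2 ^ b)%N; [mg | simp].
Qed.

Lemma fam_iie b : (b.+1 < m)%N ->
  good <<[set t ^+ (2 ^ (m - 1)); t ^+ (2 ^ b) * x; y]>> b.+1 4 1 0.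
Proof.
move=> lt; have le := ltnW lt.
rewrite txE yEb tEb; apply: goodL => //.
- by rewrite !subUset !sub1set !mem_Sp // prd_z //; simp.
- by rewrite -sqx; apply: groupM; mg.
move=> [] [] //= _; last exact: rep00.
- exists (2 ^ b + 0 + h * (false * false))%N; last by simp.
  by have := @groupM _ _ (f (2 ^ b) true false) (f 0 false true); rewrite fmulb; apply; mg.
- by exists (2 ^ b)%N; [mg | simp].
- by exists 0; [mg | simp].
Qed.

Lemma fam_iif b : (b.+1 < m)%N ->
  good <<[set t ^+ (2 ^ b) * x; t ^+ (2 ^ b) * y]>> b.+1 4 1 1.
Proof.
move=> lt; have le := ltnW lt.
rewrite txE tyE; apply: goodL => //.
- by rewrite !subUset !sub1set !mem_Sp //; simp.
- by rewrite -sqx; apply: groupM; mg.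
move=> [] [] //= _; last exact: rep00.
- exists (2 ^ b + 2 ^ b + h * (false * false))%N.
    by have := @groupM _ _ (f (2 ^ b) true false) (f (2 ^ b) false true); rewrite fmulb; apply; mg.
  by simp; congr (_ %% _); lia.
- by exists (2 ^ b)%N; [mg | simp].
- by exists (2 ^ b)%N; [mg | simp].
Qed.

Lemma x_G : x \in G. Proof. by rewrite hG mem_gen // !inE eqxx. Qed.
Lemma y_G : y \in G. Proof. by rewrite hG mem_gen // !inE eqxx orbT. Qed.

Lemma oddh w : odd w -> (w * h)%N = h %[mod N].
Proof.
move=> ow; rewrite {1}(divn_eq w 2) modn2 ow mulnDl mul1n -mulnA -hN.
by rewrite modnMDl.
Qed.

Lemma fz i (a b : bool) : f i a b * z = f (i + h) a b.
Proof.
rewrite tEb fmulb; apply: fcongr; rewrite ?addbF //.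
by rewrite /= !muln0 addn0.
Qed.

Lemma dec2 j : j %% N != 0 ->
  exists v w, [/\ (v < m)%N, odd w & j %% N = (w * 2 ^ v)%N].
Proof.
move=> nz; have pos : (0 < j %% N)%N by rewrite lt0n.
case: (pfactor_coprime (isT : prime 2) pos) => w cw e.
exists (logn 2 (j %% N)), w; split => //; last by rewrite -coprime2n.
rewrite -(ltn_exp2l _ _ (isT : 1 < 2)%N); apply: leq_ltn_trans (ltn_pmod j N_gt0).
rewrite {2}e leq_pmull //; move: cw; rewrite coprime2n; by case: (w).
Qed.

Lemma hz (H : {group gT}) : H <| G -> H :!=: 1 -> z \in H.
Proof.
move=> nHG /trivgPn [g Hg ng1].
have sHG := normal_sub nHG; have nG := normal_norm nHG.
have [i [a [b e]]] := memG (subsetP sHG g Hg); subst g.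
case: a Hg ng1 => Hg ng1.
  have Hy : (f i true b) ^ y \in H by rewrite memJ_norm // (subsetP nG) // y_G.
  rewrite conjy (_ : (h * true)%N = h) ?muln1 // -fz in Hy.
  by rewrite -(mulKg (f i true b) z) groupM ?groupV.
case: b Hg ng1 => Hg ng1.
  have Hx : (f i false true) ^ x \in H by rewrite memJ_norm // (subsetP nG) // x_G.
  rewrite conjx (_ : (h * true)%N = h) ?muln1 // -fz in Hx.
  by rewrite -(mulKg (f i false true) z) groupM ?groupV.
have nz : i %% N != 0.
  apply: contra ng1 => /eqP e0; apply/eqP; rewrite -f000 fb e0 //.
have [v [w [lv ow e]]] := dec2 nz.
have <- : (f i false false) ^+ (2 ^ (m - 1 - v)) = z.
  rewrite -tEb -expgM !tEb; apply: fcongr => //.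
  rewrite -modnMml e -mulnA -expnD subnKC; last by lia.
  exact: oddh.
exact: groupX.
Qed.

Lemma alphaH (H : {group gT}) : z \in H -> exists al, [/\ (al < m)%N,
  t ^+ (2 ^ al) \in H & forall j, (t ^+ j \in H) = (j == 0 %[mod 2 ^ al])].
Proof.
move=> Hz.
have exP : exists a, t ^+ (2 ^ a) \in H by exists (m - 1).
case: (ex_minnP exP) => al Hal minal.
have lt : (al < m)%N by have := minal _ Hz; lia.
exists al; split => // j; apply/idP/idP; last by move/eqP; exact: tmem.
move=> Hj.
have dvd := dvd_alN (ltnW lt).
have ej : t ^+ j = t ^+ (j %% N) by rewrite (expg_mod _ tN).
case: (eqVneq (j %% N) 0) => [e0|nz].
  by apply/eqP; rewrite -(modn_dvdm j dvd) e0.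
have [v [w [lv ow e]]] := dec2 nz.
pose u := t ^+ (2 ^ v).
have Hu : u \in H.
  have cw : coprime #[u] w.
    apply: (@coprime_dvdl _ N); last by rewrite coprimeXl // coprime2n.
    by rewrite order_dvdn -expgM mulnC expgM tN expg1n.
  have : generator <[u]> (u ^+ w) by rewrite generator_coprime.
  rewrite /generator => /eqP gen.
  have : u ^+ w \in H by rewrite /u -expgM mulnC -e -ej.
  by rewrite -cycle_subG -gen cycle_subG.
have lev := minal _ Hu.
apply/eqP; rewrite -(modn_dvdm j dvd) e mod0n.
by apply/eqP; apply: dvdn_mull; exact: dvdn_exp2l.
Qed.

Lemma typ al r : (r + r)%N = 0 %[mod 2 ^ al] ->
  exists tau : bool, (tau -> 0 < al)%N /\ r = (2 ^ al.-1 * tau)%N %[mod 2 ^ al].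
Proof.
case: al => [|al] e; first by exists false; split => //; rewrite !modn1.
have : (2 ^ al %| r)%N.
  have : (2 * 2 ^ al %| 2 * r)%N by rewrite -expnS mul2n -addnn /dvdn e mod0n.
  by rewrite dvdn_pmul2l.
case/dvdnP => q ->; exists (odd q); split => //=.
rewrite {1}(divn_eq q 2) mulnDl -mulnA -expnS modnMDl modn2.
by rewrite mulnC.
Qed.

Lemma classH (H : {group gT}) al (a0 b0 : bool) : (al < m)%N ->
  (forall j, (t ^+ j \in H) = (j == 0 %[mod 2 ^ al])) ->
  (forall i, f i a0 b0 \notin H) \/
  exists tau : bool, (tau -> 0 < al)%N /\
    forall i, (f i a0 b0 \in H) = (i == 2 ^ al.-1 * tau %[mod 2 ^ al]).
Proof.
move=> lt Ht; have le := ltnW lt.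
case: (boolP [exists i : 'I_N, f i a0 b0 \in H]); last first.
  move/existsPn => no; left => i; rewrite fb.
  exact: (no (Ordinal (ltn_pmod i N_gt0))).
case/existsP => r Hr; right.
have : t ^+ (r + r + h * (b0 * a0)) \in H.
  by have := groupM Hr Hr; rewrite fmulb !addbb -tEb.
rewrite Ht modh // => /eqP /typ [tau [pt et]].
exists tau; split => // i; apply/idP/idP.
  by move=> Hi; apply/eqP; rewrite (rep_up le _ Hr Hi) ?et // => j; rewrite Ht => /eqP.
have Ht2 : t ^+ (2 ^ al) \in H by rewrite Ht modnn mod0n.
by move/eqP => ei; apply: (rep_low Ht2 le Hr); rewrite ei et.
Qed.

Lemma goodH (H : {group gT}) al k u v : H \subset G ->
  (forall j, (t ^+ j \in H) = (j == 0 %[mod 2 ^ al])) ->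
  (forall i (a b : bool), a || b -> (f i a b \in H) = prd al k u v i a b) ->
  good H al k u v.
Proof.
move=> sHG Ht HP; split => // i [] [] //; try by apply: HP.
rewrite -tEb Ht /prd E00; by clear HP; case: k => [|[|[|[|k]]]].
Qed.

Lemma good_eq (K1 K2 : {set gT}) al k u v :
  good K1 al k u v -> good K2 al k u v -> K1 = K2.
Proof.
move=> [s1 h1] [s2 h2]; apply/setP => g.
case gG : (g \in G); last first.
  by apply/idP/idP => [/(subsetP s1)|/(subsetP s2)]; rewrite gG.
by have [i [a [b ->]]] := memG gG; rewrite h1 h2.
Qed.

Lemma in_i a L : (a < m)%N ->
  L \in [:: <<[set t ^+ (2 ^ a); x]>>; <<[set t ^+ (2 ^ a); y]>>;
            <<[set t ^+ (2 ^ a); x * y]>>; <<[set t ^+ (2 ^ a); x; y]>>] ->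
  L \in D1_list m x y t.
Proof.
move=> lt HL; rewrite /D1_list mem_cat; apply/orP; left.
by apply/flatten_mapP; exists a => //; rewrite mem_iota.
Qed.

Lemma in_ii b L : (b < m - 1)%N ->
  L \in [:: <[t ^+ (2 ^ b) * x]>; <[t ^+ (2 ^ b) * y]>;
                   <<[set t ^+ (2 ^ (m - 1)); t ^+ (2 ^ b) * (x * y)]>>;
                   <<[set t ^+ (2 ^ (m - 1)); x; t ^+ (2 ^ b) * y]>>;
                   <<[set t ^+ (2 ^ (m - 1)); t ^+ (2 ^ b) * x; y]>>;
                   <<[set t ^+ (2 ^ b) * x; t ^+ (2 ^ b) * y]>>] ->
  L \in D1_list m x y t.
Proof.
move=> lt HL; rewrite /D1_list !mem_cat; apply/orP; right; apply/orP; left.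
by apply/flatten_mapP; exists b => //; rewrite mem_iota.
Qed.

Lemma in_iii c : (c < m)%N -> <[t ^+ (2 ^ c)]> \in D1_list m x y t.
Proof.
move=> lt; rewrite /D1_list !mem_cat; apply/orP; right; apply/orP; right.
by apply/mapP; exists c => //; rewrite mem_iota.
Qed.

Lemma complete (H : {group gT}) : H <| G -> H :!=: 1 -> (H : {set gT}) \in D1_list m x y t.
Proof.
move=> nHG ntH; have sHG := normal_sub nHG.
have [al [lt Ht2 Ht]] := alphaH (hz nHG ntH).
have fin : forall L k u v, good L al k u v -> L \in D1_list m x y t ->
    good H al k u v -> (H : {set gT}) \in D1_list m x y t.
  by move=> L k u v gL inL gHH; rewrite (good_eq gHH gL).
have gH : forall k u v, (forall i (a b : bool), a || b ->
    (f i a b \in H) = prd al k u v i a b) -> good H al k u v.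
  by move=> k u v; apply: goodH.
have shift : forall tau : bool, (tau -> 0 < al)%N -> tau -> exists b, al = b.+1.
  by move=> tau pt tt; have := pt tt; case: (al) => // b _; exists b.
case: (classH true false lt Ht) => [nX | [tx [px eX]]];
case: (classH false true lt Ht) => [nY | [ty [py eY]]];
case: (classH true true lt Ht) => [nXY | [txy [pxy eXY]]].
- apply: (fin _ _ _ _ (fam_iii lt) (in_iii lt)); apply: gH => i [] [] //= _;
  by rewrite /prd /= ?(negbTE (nX i)) ?(negbTE (nY i)) ?(negbTE (nXY i)).
- case: txy pxy eXY => pxy eXY.
    have [b eb] := shift _ pxy isT; subst al.
    apply: (fin _ _ _ _ (fam_iic lt)); first by apply: (@in_ii b); [lia | rewrite !in_cons eqxx ?orbT].
    apply: gH => i [] [] //= _;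
    rewrite /prd /= ?(negbTE (nX i)) ?(negbTE (nY i)) ?eXY //.
  apply: (fin _ _ _ _ (fam_ic lt)); first by apply: (@in_i al); [done | rewrite !in_cons eqxx ?orbT].
  apply: gH => i [] [] //= _;
  by rewrite /prd /= ?(negbTE (nX i)) ?(negbTE (nY i)) ?eXY.
-
  case: ty py eY => py eY.
    have [b eb] := shift _ py isT; subst al.
    apply: (fin _ _ _ _ (fam_iib lt)); first by apply: (@in_ii b); [lia | rewrite !in_cons eqxx ?orbT].
    apply: gH => i [] [] //= _;
    by rewrite /prd /= ?(negbTE (nX i)) ?(negbTE (nXY i)) ?eY.
  apply: (fin _ _ _ _ (fam_ib lt)); first by apply: (@in_i al); [done | rewrite !in_cons eqxx ?orbT].
  apply: gH => i [] [] //= _;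
  by rewrite /prd /= ?(negbTE (nX i)) ?(negbTE (nXY i)) ?eY.
- have mY : f (2 ^ al.-1 * ty) false true \in H by rewrite eY eqxx.
  have mXY : f (2 ^ al.-1 * txy) true true \in H by rewrite eXY eqxx.
  by have := groupM mXY mY; rewrite fmulb /= (negbTE (nX _)).
-
  case: tx px eX => px eX.
    have [b eb] := shift _ px isT; subst al.
    apply: (fin _ _ _ _ (fam_iia lt)); first by apply: (@in_ii b); [lia | rewrite !in_cons eqxx ?orbT].
    apply: gH => i [] [] //= _;
    by rewrite /prd /= ?(negbTE (nY i)) ?(negbTE (nXY i)) ?eX.
  apply: (fin _ _ _ _ (fam_ia lt)); first by apply: (@in_i al); [done | rewrite !in_cons eqxx ?orbT].
  apply: gH => i [] [] //= _;
  by rewrite /prd /= ?(negbTE (nY i)) ?(negbTE (nXY i)) ?eX.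
- have mX : f (2 ^ al.-1 * tx) true false \in H by rewrite eX eqxx.
  have mXY : f (2 ^ al.-1 * txy) true true \in H by rewrite eXY eqxx.
  by have := groupM mX mXY; rewrite fmulb /= (negbTE (nY _)).
- have mX : f (2 ^ al.-1 * tx) true false \in H by rewrite eX eqxx.
  have mY : f (2 ^ al.-1 * ty) false true \in H by rewrite eY eqxx.
  by have := groupM mX mY; rewrite fmulb /= (negbTE (nXY _)).
have mX : f (2 ^ al.-1 * tx) true false \in H by rewrite eX eqxx.
have mY : f (2 ^ al.-1 * ty) false true \in H by rewrite eY eqxx.
have := groupM mX mY; rewrite fmulb /= eXY => /eqP mP.
have eXY' : forall i, (f i true true \in H) = (i == 2 ^ al.-1 * (tx * 1 + ty * 1) %[mod 2 ^ al]).
  by move=> i; rewrite eXY -mP !muln0 addn0 !muln1 mulnDr.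
clear mP eXY.
case: tx px eX mX eXY' => px eX mX eXY'; case: ty py eY mY eXY' => py eY mY eXY'.
- have [b eb] := shift _ px isT; subst al.
  apply: (fin _ _ _ _ (fam_iif lt)); first by apply: (@in_ii b); [lia | rewrite !in_cons eqxx ?orbT].
  apply: gH => i [] [] //= _;
  by rewrite /prd /= ?eX ?eY ?eXY'.
- have [b eb] := shift _ px isT; subst al.
  apply: (fin _ _ _ _ (fam_iie lt)); first by apply: (@in_ii b); [lia | rewrite !in_cons eqxx ?orbT].
  apply: gH => i [] [] //= _;
  by rewrite /prd /= ?eX ?eY ?eXY'.
- have [b eb] := shift _ py isT; subst al.
  apply: (fin _ _ _ _ (fam_iid lt)); first by apply: (@in_ii b); [lia | rewrite !in_cons eqxx ?orbT].
  apply: gH => i [] [] //= _;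
  by rewrite /prd /= ?eX ?eY ?eXY'.
apply: (fin _ _ _ _ (fam_id lt)); first by apply: (@in_i al); [done | rewrite !in_cons eqxx ?orbT].
apply: gH => i [] [] //= _;
by rewrite /prd /= ?eX ?eY ?eXY'.
Qed.

Lemma list_good (L : {set gT}) : L \in D1_list m x y t ->
  exists al k u v, (al < m)%N /\ good L al k u v.
Proof.
rewrite /D1_list !mem_cat => /orP [/flatten_mapP [a]|/orP [/flatten_mapP [b]|/mapP [c]]].
- rewrite mem_iota add0n => /andP [_ lt].
  rewrite !in_cons in_nil orbF => /or4P [] /eqP ->; exists a; do 3 eexists; split; [exact: lt| |exact: lt| |exact: lt| |exact: lt|].
  + exact: fam_ia lt.
  + exact: fam_ib lt.
  + exact: fam_ic lt.
  + exact: fam_id lt.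
- rewrite mem_iota add0n => /andP [_ lt0]; have lt : (b.+1 < m)%N by lia.
  rewrite !in_cons in_nil orbF => /orP [/eqP->|/orP [/eqP->|/orP [/eqP->|/orP [/eqP->|/orP [/eqP->|/eqP->]]]]];
    exists b.+1; do 3 eexists; (split; [exact: lt|]).
  + exact: fam_iia lt.
  + exact: fam_iib lt.
  + exact: fam_iic lt.
  + exact: fam_iid lt.
  + exact: fam_iie lt.
  + exact: fam_iif lt.
rewrite mem_iota add0n => /andP [_ lt] ->; exists c; do 3 eexists; split; [exact: lt | exact: fam_iii lt].
Qed.

Lemma count_lt n al : (al <= n)%N -> count (fun a => (a < al)%N) (iota 0 n) = al.
Proof.
move=> le; rewrite -(subnKC le) iotaD count_cat add0n.
rewrite (@eq_in_count _ _ predT) ?count_predT ?size_iota; last first.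
  by move=> a; rewrite mem_iota add0n => /andP [_ ->].
rewrite (@eq_in_count _ _ pred0) ?count_pred0 ?addn0 //.
by move=> a; rewrite mem_iota => /andP [h1 _]; rewrite /= ltnNge h1.
Qed.

Definition sig (L : {set gT}) :=
  (count (fun a => t ^+ (2 ^ a) \notin L) (iota 0 m),
   ([exists i : 'I_N, f i true false \in L], [exists i : 'I_N, f i false true \in L],
    [exists i : 'I_N, f i true true \in L], x \in L, y \in L, x * y \in L)).

Lemma exb al k u v (a b : bool) : (al <= m)%N ->
  [exists i : 'I_N, prd al k u v i a b] = Pk k a b.
Proof.
move=> le; apply/existsP/idP => [[i /andP [] //]|P].
exists (Ordinal (ltn_pmod (E al u v a b) N_gt0)); rewrite /prd P /=.
by rewrite (modn_dvdm _ (dvd_alN le)).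
Qed.

Lemma sig_good L al k u v : (al < m)%N -> good L al k u v ->
  sig L = (al, (Pk k true false, Pk k false true, Pk k true true,
     prd al k u v 0 true false, prd al k u v 0 false true, prd al k u v 0 true true)).
Proof.
move=> lt [_ HL]; have le := ltnW lt.
rewrite /sig xyE xEb yEb !HL !(eq_existsb (fun i : 'I_N => HL i _ _)) ?exb //.
congr (_, _); rewrite -[RHS](count_lt le); apply: eq_count => a /=.
rewrite tEb HL /prd E00 mod0n -/(dvdn _ _) dvdn_Pexp2l // ltnNge.
by clear HL; case: k => [|[|[|[|k]]]].
Qed.

Lemma hb_mod b w : (0 == 2 ^ b * w %[mod 2 ^ b.+1]) = ~~ odd w.
Proof.
rewrite {1}(divn_eq w 2) mulnDr mulnCA -expnSr modnMDl modn2 mod0n.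
case: (odd w) => /=; last by rewrite muln0 mod0n.
rewrite muln1 modn_small ?ltn_exp2l //.
by rewrite eq_sym expn_eq0.
Qed.

Definition BI := [:: (true,false,false,true,false,false); (false,true,false,false,true,false);
  (false,false,true,false,false,true); (true,true,true,true,true,true)].
Definition BII := [:: (true,false,false,false,false,false); (false,true,false,false,false,false);
  (false,false,true,false,false,false); (true,true,true,true,false,false);
  (true,true,true,false,true,false); (true,true,true,false,false,true)].
Definition BIII := (false,false,false,false,false,false).

Lemma sig_list : map sig (D1_list m x y t) =
  flatten [seq [seq (a, B) | B <- BI] | a <- iota 0 m] ++
  flatten [seq [seq (b.+1, B) | B <- BII] | b <- iota 0 (m - 1)] ++
  [seq (c, BIII) | c <- iota 0 m].
Proof.
rewrite /D1_list /D1_list_i /D1_list_ii /D1_list_iii !map_cat !map_flatten -!map_comp.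
congr (_ ++ (_ ++ _)).
- congr (flatten _); apply/eq_in_map => a; rewrite mem_iota add0n => /andP [_ lt] /=.
  rewrite (sig_good lt (fam_ia lt)) (sig_good lt (fam_ib lt)) (sig_good lt (fam_ic lt)) (sig_good lt (fam_id lt)).
  by rewrite /prd /E /= !muln0 !mod0n.
- congr (flatten _); apply/eq_in_map => b; rewrite mem_iota add0n => /andP [_ lt0] /=.
  have lt : (b.+1 < m)%N by lia.
  rewrite (sig_good lt (fam_iia lt)) (sig_good lt (fam_iib lt)) (sig_good lt (fam_iic lt)).
  rewrite (sig_good lt (fam_iid lt)) (sig_good lt (fam_iie lt)) (sig_good lt (fam_iif lt)).
  by rewrite /prd /E /= !hb_mod.
apply/eq_in_map => c; rewrite mem_iota add0n => /andP [_ lt] /=.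
by rewrite (sig_good lt (fam_iii lt)).
Qed.


Lemma main_sec (H : {group gT}) :
  (H <| G) && (H :!=: 1) <-> (H : {set gT}) \in D1_list m x y t.
Proof.
split; first by case/andP => nH ntH; exact: complete.
by move/list_good => [al [k [u [v [lt gd]]]]]; exact: good_normal lt gd.
Qed.

End D1.

Lemma uniq_blk (S : eqType) (key : nat -> nat) (s : seq nat) (Bs : seq S) :
  injective key -> uniq s -> uniq Bs ->
  uniq (flatten [seq [seq (key a, B) | B <- Bs] | a <- s]).
Proof.
move=> ik; elim: s => //= a s IH /andP [na us] ub.
rewrite cat_uniq IH // andbT (@map_inj_uniq _ _ (fun B => (key a, B)) (fun B1 B2 e => congr1 snd e)) ub /=.
apply/hasPn => [[a' B']] /flatten_mapP [a2 a2s /mapP [B2 _ [ea eB]]].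
apply/negP => /mapP [B3 _ [ea' _]].
by move: a2s; rewrite (ik _ _ (etrans (esym ea) ea')) (negbTE na).
Qed.

Lemma mem_blk (S : eqType) (key : nat -> nat) (s : seq nat) (Bs : seq S) c :
  c \in flatten [seq [seq (key a, B) | B <- Bs] | a <- s] -> c.2 \in Bs.
Proof. by case/flatten_mapP => a _ /mapP [B HB ->]. Qed.

Lemma mem_blk0 (S : eqType) (s : seq nat) (Bs : seq S) c :
  c \in flatten [seq [seq (a, B) | B <- Bs] | a <- s] -> c.2 \in Bs.
Proof. by case/flatten_mapP => a _ /mapP [B HB ->]. Qed.

Lemma uniq_D1 (gT : finGroupType) (m : nat) (x y t : gT) (G : {group gT}) :
  (2 <= m)%N -> D1_rels m x y t -> G :=: <<[set x; y; t]>> -> #|G| = (2 ^ (m + 2))%N ->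
  uniq (D1_list m x y t).
Proof.
move=> hm hrel hG hcard.
apply: (@map_uniq _ _ (sig m x y t)); rewrite (sig_list hm hrel hG hcard).
have u1 : uniq (flatten [seq [seq (a, B) | B <- BI] | a <- iota 0 m]).
  exact: (@uniq_blk _ id _ _ (@inj_id _) (iota_uniq _ _)).
have u2 : uniq (flatten [seq [seq (b.+1, B) | B <- BII] | b <- iota 0 (m - 1)]).
  exact: (@uniq_blk _ succn _ _ succn_inj (iota_uniq _ _)).
rewrite !cat_uniq u1 u2.
rewrite (@map_inj_uniq _ _ (fun c => (c, BIII)) (fun c1 c2 e => congr1 fst e)) iota_uniq !andbT !andTb.
apply/andP; split.
  apply/hasPn => c; rewrite mem_cat => /orP [] Hc; apply/negP => Hc1.
    have : has (mem BI) BII by apply/hasP; exists c.2; [exact: mem_blk Hc | exact: mem_blk0 Hc1].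
    by [].
  have : BIII \in BI by case/mapP: Hc => c' _ e; rewrite -[BIII]/((c', BIII).2) -e; exact: mem_blk0 Hc1.
  by [].
apply/hasPn => c Hc; apply/negP => Hc1.
have : BIII \in BII by case/mapP: Hc => c' _ e; rewrite -[BIII]/((c', BIII).2) -e; exact: mem_blk Hc1.
by [].
Qed.

Theorem lemma4 (gT : finGroupType) (m : nat) (x y t : gT) (G : {group gT}) :
  (2 <= m)%N ->
  D1_rels m x y t ->
  G :=: <<[set x; y; t]>> ->
  #|G| = (2 ^ (m + 2))%N ->
  uniq (D1_list m x y t) /\
  (forall H : {group gT},
     (H <| G) && (H :!=: 1) <-> (H : {set gT}) \in D1_list m x y t).
Proof.
move=> hm hrel hG hcard; split; first exact: uniq_D1 hm hrel hG hcard.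
by move=> H; apply: main_sec.
Qed.
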